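(* Let $R$ be a commutative $\mathbb{Z}[\mu_{4p^\infty},\frac1{\sqrt p}]$-algebra and let $\eta,\eta'$ be two Heisenberg representations for the Heisenberg triple $(C\widetilde\boxtimes V,C,\nu)$ over $R$, with associated Weil representations $\omega,\omega'$. Then the inclusion \[ \mathrm{Hom}_{R(\mathrm{Sp}(V)\ltimes(C\widetilde\boxtimes V))}(\omega\ltimes\eta,\omega'\ltimes\eta')\subseteq\mathrm{Hom}_{R(C\widetilde\boxtimes V)}(\eta,\eta') \] is an equality.
   Context: $p$ odd prime; $C$ cyclic of order $p^N$, $\mu_p\subset C$ of order $p$; $V$ a finite-dimensional $\mathbb{F}_p$-space with nondegenerate symplectic form $\theta$ valued in $\mu_p$; $C\widetilde\boxtimes V$ is $C\times V$ with law $(a_1,v_1)(a_2,v_2)=(a_1a_2\sqrt{\theta(v_1,v_2)},v_1+v_2)$, with $\mathrm{Sp}(V)$ acting on the second coordinate; $\nu:C\to\mu_{p^\infty}\subset R^\times$ injective. A Heisenberg representation for $(C\widetilde\boxtimes V,C,\nu)$ is a smooth $R(C\widetilde\boxtimes V)$-module that is finitely generated projective over $R$, $\nu$-isotypic on $C$, with endomorphism ring $R$. For a Lagrangian $W\subseteq V$, $\eta_{\nu,W}=\mathrm{ind}_{C\times W}^{C\widetilde\boxtimes V}(\nu\times1)$ and $\omega_{\nu,W}\ltimes\eta_{\nu,W}$ is the base change to $R$ of Gérardin's Weil representation of $\mathrm{Sp}(V)$ (characterized by $\omega(g)\eta(k)\omega(g)^{-1}=\eta(g\cdot k)$ for $k\in\mu_p\widetilde\boxtimes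 V$, with Gérardin's normalization if $p=3,\dim V=2$) restricted to the lattice of $\mathbb{Z}[\mu_{4p^\infty},\frac1{\sqrt p}]$-valued functions. The Weil representation $\omega$ associated to a Heisenberg representation $\eta$ is obtained by transporting $(\omega_{\nu,W}\ltimes\eta_{\nu,W})\otimes1$ along the evaluation isomorphism $\eta_{\nu,W}\otimes_R\mathrm{Hom}_{R(C\widetilde\boxtimes V)}(\eta_{\nu,W},\eta)\xrightarrow{\sim}\eta$; it is independent of $W$. *)

(* Defs.v *)
From HB Require Import structures.
From mathcomp Require Import all_boot all_order all_algebra all_field.
Set Implicit Arguments. Unset Strict Implicit. Unset Printing Implicit Defensive.
Import GRing.Theory.
Local Open Scope ring_scope.

(* Model: C = 'Z_(p^N) written additively (cyclic of order p^N);
   mu_p = p^(N-1) 'Z_(p^N), identified with 'F_p via iota_mu;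
   V = 'cV['F_p]_n; the mu_p-valued symplectic form is iota_mu o theta. *)

Definition heis (p N n : nat) := ('Z_(p ^ N) * 'cV['F_p]_n)%type.

Definition iota_mu (p N : nat) (x : 'F_p) : 'Z_(p ^ N) := (p ^ N.-1 * val x)%N%:R.

(* (a1,v1)(a2,v2) = (a1 a2 sqrt(theta(v1,v2)), v1+v2); additively the unique
   square root of iota_mu x in C (odd order) is iota_mu (x/2). *)
Definition heis_mul (p N n : nat) (theta : 'cV['F_p]_n -> 'cV['F_p]_n -> 'F_p)
  (h1 h2 : heis p N n) : heis p N n :=
  (h1.1 + h2.1 + iota_mu N (theta h1.2 h2.2 / 2%:R), h1.2 + h2.2).

Definition is_symplectic_form (p n : nat) (theta : 'cV['F_p]_n -> 'cV['F_p]_n -> 'F_p) : Prop :=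
  (forall a u v w, theta (a *: u + v) w = a * theta u w + theta v w) /\
  (forall a u v w, theta u (a *: v + w) = a * theta u v + theta u w) /\
  (forall v, theta v v = 0) /\
  (forall v, (forall w, theta v w = 0) -> v = 0).

Definition in_Sp (p n : nat) (theta : 'cV['F_p]_n -> 'cV['F_p]_n -> 'F_p) (g : 'M['F_p]_n) : Prop :=
  g \in unitmx /\ forall v w, theta (g *m v) (g *m w) = theta v w.

Definition is_Lagrangian (p n : nat) (theta : 'cV['F_p]_n -> 'cV['F_p]_n -> 'F_p)
  (W : {set 'cV['F_p]_n}) : Prop :=
  0 \in W /\ (forall a v w, v \in W -> w \in W -> a *: v + w \in W) /\
  (forall v, v \in W <-> (forall w, w \in W -> theta v w = 0)).

(* R is a commutative Z[mu_{4p^oo}, 1/sqrt p]-algebra: a compatible system of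
   primitive 4p^k-th roots of unity (roots of the cyclotomic polynomials) and
   p invertible (equivalently sqrt p invertible). *)
Definition Zmu_sqrtp_algebra (R : comPzRingType) (p : nat) : Prop :=
  (exists zeta : nat -> R, forall k,
      \sum_(i < size 'Phi_(4 * p ^ k)) (('Phi_(4 * p ^ k))`_i)%:~R * zeta k ^+ i = 0 /\
      zeta k.+1 ^+ p = zeta k) /\
  exists u : R, u * p%:R = 1.

Definition is_inj_char (R : comPzRingType) (p N : nat) (nu : 'Z_(p ^ N) -> R) : Prop :=
  (forall a b, nu (a + b) = nu a * nu b) /\ nu 0 = 1 /\ injective nu.

Definition Rlinear (R : comPzRingType) (M M' : lmodType R) (f : M -> M') : Prop :=
  forall (a : R) x y, f (a *: x + y) = a *: f x + f y.

Definition is_fg_projective (R : comPzRingType) (M : lmodType R) : Prop :=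
  exists m (i : M -> 'rV[R]_m) (pi : 'rV[R]_m -> M),
    Rlinear i /\ Rlinear pi /\ forall x, pi (i x) = x.

Definition is_heis_rep (R : comPzRingType) (p N n : nat)
  (theta : 'cV['F_p]_n -> 'cV['F_p]_n -> 'F_p) (M : lmodType R)
  (rho : heis p N n -> M -> M) : Prop :=
  (forall h, Rlinear (rho h)) /\
  (forall h1 h2 x, rho (heis_mul theta h1 h2) x = rho h1 (rho h2 x)) /\
  (forall x, rho (0, 0) x = x).

Definition hom_H (R : comPzRingType) (p N n : nat)
  (theta : 'cV['F_p]_n -> 'cV['F_p]_n -> 'F_p) (M M' : lmodType R)
  (rho : heis p N n -> M -> M) (rho' : heis p N n -> M' -> M') (f : M -> M') : Prop :=
  Rlinear f /\ forall h x, f (rho h x) = rho' h (f x).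

Definition is_heisenberg_rep (R : comPzRingType) (p N n : nat)
  (theta : 'cV['F_p]_n -> 'cV['F_p]_n -> 'F_p) (nu : 'Z_(p ^ N) -> R)
  (M : lmodType R) (rho : heis p N n -> M -> M) : Prop :=
  is_heis_rep theta rho /\
  (forall c x, rho (c, 0) x = nu c *: x) /\
  is_fg_projective M /\
  (forall f : M -> M, hom_H theta rho rho f -> exists r : R, forall x, f x = r *: x) /\
  (forall r : R, (forall x : M, r *: x = 0) -> r = 0).

(* eta_{nu,W} = ind_{C x W}^{C~V} (nu x 1): the functions f on C~V with
   f((c,w)h) = nu(c) f(h), with C~V acting by right translation. *)
Definition in_etaW (R : comPzRingType) (p N n : nat)
  (theta : 'cV['F_p]_n -> 'cV['F_p]_n -> 'F_p) (nu : 'Z_(p ^ N) -> R)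
  (W : {set 'cV['F_p]_n}) (f : {ffun heis p N n -> R}) : Prop :=
  forall c w h, w \in W -> f (heis_mul theta (c, w) h) = nu c * f h.

Definition rtrans (R : comPzRingType) (p N n : nat)
  (theta : 'cV['F_p]_n -> 'cV['F_p]_n -> 'F_p) (h : heis p N n)
  (f : {ffun heis p N n -> R}) : {ffun heis p N n -> R} :=
  [ffun x => f (heis_mul theta x h)].

Definition lincomb (R : comPzRingType) (T : finType) (a : R) (f g : {ffun T -> R}) :
  {ffun T -> R} := [ffun x => a * f x + g x].

Definition is_weil_model (R : comPzRingType) (p N n : nat)
  (theta : 'cV['F_p]_n -> 'cV['F_p]_n -> 'F_p) (nu : 'Z_(p ^ N) -> R)
  (W : {set 'cV['F_p]_n})
  (omW : 'M['F_p]_n -> {ffun heis p N n -> R} -> {ffun heis p N n -> R}) : Prop :=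
  (forall g, in_Sp theta g ->
     (forall f, in_etaW theta nu W f -> in_etaW theta nu W (omW g f)) /\
     (forall a f1 f2, in_etaW theta nu W f1 -> in_etaW theta nu W f2 ->
        omW g (lincomb a f1 f2) = lincomb a (omW g f1) (omW g f2)) /\
     (forall (x : 'F_p) v f, in_etaW theta nu W f ->
        omW g (rtrans theta (iota_mu N x, v) f)
        = rtrans theta (iota_mu N x, g *m v) (omW g f))) /\
  (forall g1 g2 f, in_Sp theta g1 -> in_Sp theta g2 -> in_etaW theta nu W f ->
     omW (g1 *m g2) f = omW g1 (omW g2 f)) /\
  (forall f, in_etaW theta nu W f -> omW 1%:M f = f).

Definition homW (R : comPzRingType) (p N n : nat)
  (theta : 'cV['F_p]_n -> 'cV['F_p]_n -> 'F_p) (nu : 'Z_(p ^ N) -> R)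
  (W : {set 'cV['F_p]_n}) (M : lmodType R) (rho : heis p N n -> M -> M)
  (phi : {ffun heis p N n -> R} -> M) : Prop :=
  (forall a f1 f2, in_etaW theta nu W f1 -> in_etaW theta nu W f2 ->
     phi (lincomb a f1 f2) = a *: phi f1 + phi f2) /\
  (forall h f, in_etaW theta nu W f -> phi (rtrans theta h f) = rho h (phi f)).

(* omega is the Weil representation associated to (M, rho): it is the
   transport of omega_W (x) 1 along the evaluation isomorphism
   eta_W (x) Hom(eta_W, M) -> M, i.e. omega(g)(phi(f)) = phi(omega_W(g) f). *)
Definition is_assoc_weil (R : comPzRingType) (p N n : nat)
  (theta : 'cV['F_p]_n -> 'cV['F_p]_n -> 'F_p) (nu : 'Z_(p ^ N) -> R)
  (W : {set 'cV['F_p]_n})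
  (omW : 'M['F_p]_n -> {ffun heis p N n -> R} -> {ffun heis p N n -> R})
  (M : lmodType R) (rho : heis p N n -> M -> M) (om : 'M['F_p]_n -> M -> M) : Prop :=
  forall g, in_Sp theta g ->
    Rlinear (om g) /\
    forall phi, homW theta nu W rho phi ->
      forall f, in_etaW theta nu W f -> om g (phi f) = phi (omW g f).

Definition hom_SpH (R : comPzRingType) (p N n : nat)
  (theta : 'cV['F_p]_n -> 'cV['F_p]_n -> 'F_p) (M M' : lmodType R)
  (rho : heis p N n -> M -> M) (rho' : heis p N n -> M' -> M')
  (om : 'M['F_p]_n -> M -> M) (om' : 'M['F_p]_n -> M' -> M') (f : M -> M') : Prop :=
  hom_H theta rho rho' f /\
  forall g x, in_Sp theta g -> f (om g x) = om' g (f x).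

(* Main.v *)
Require Import Defs.
From HB Require Import structures.
From mathcomp Require Import all_boot all_order all_algebra all_field ring.
Import GRing.Theory.
Local Open Scope ring_scope.
Set Implicit Arguments. Unset Strict Implicit. Unset Printing Implicit Defensive.

Section Basic.
Variables (p N n : nat).
Hypothesis pP : prime p.
Hypothesis podd : odd p.
Hypothesis N0 : (0 < N)%N.
Variable theta : 'cV['F_p]_n -> 'cV['F_p]_n -> 'F_p.
Hypothesis symp : is_symplectic_form theta.

Lemma thDl u v w : theta (u + v) w = theta u w + theta v w.
Proof. by have := (symp.1 1 u v w); rewrite scale1r mul1r. Qed.
Lemma thDr u v w : theta u (v + w) = theta u v + theta u w.
Proof. by have := (symp.2.1 1 u v w); rewrite scale1r mul1r. Qed.
Lemma th0l w : theta 0 w = 0.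
Proof. have H := thDl 0 0 w; rewrite addr0 in H.
by apply: (addrI (theta 0 w)); rewrite addr0 -H. Qed.
Lemma th0r w : theta w 0 = 0.
Proof. have H := thDr w 0 0; rewrite addr0 in H.
by apply: (addrI (theta w 0)); rewrite addr0 -H. Qed.
Lemma thZl a u w : theta (a *: u) w = a * theta u w.
Proof. by have := (symp.1 a u 0 w); rewrite addr0 th0l addr0. Qed.
Lemma thZr a u w : theta u (a *: w) = a * theta u w.
Proof. by have := (symp.2.1 a u w 0); rewrite addr0 th0r addr0. Qed.
Lemma thNl u w : theta (- u) w = - theta u w.
Proof. by rewrite -scaleN1r thZl mulN1r. Qed.
Lemma thNr u w : theta u (- w) = - theta u w.
Proof. by rewrite -scaleN1r thZr mulN1r. Qed.
Lemma thA u w : theta w u = - theta u w.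
Proof.
have := symp.2.2.1 (u + w); rewrite thDl !thDr !symp.2.2.1 add0r addr0.
by move/eqP; rewrite addrC addr_eq0 => /eqP.
Qed.

Lemma two_neq0 : (2%:R : 'F_p) != 0.
Proof.
have p2 : (2 < p)%N by move: pP podd; case: (p) => [|[|[|]]].
apply/eqP => H; have := val_Fp_nat pP 2; rewrite H /= modn_small //.
Qed.

Lemma half_add (x : 'F_p) : x / 2%:R + x / 2%:R = x.
Proof. by field; apply: two_neq0. Qed.

Lemma pN_gt1 : (1 < p ^ N)%N.
Proof. by rewrite -(prednK N0) expnS (@leq_trans p) ?prime_gt1 // leq_pmulr // expn_gt0 prime_gt0. Qed.

Lemma iota_nat m : iota_mu N (m%:R : 'F_p) = (p ^ N.-1 * m)%:R.
Proof.
rewrite /iota_mu.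
have -> : val (m%:R : 'F_p) = (m %% p)%N by exact: val_Fp_nat.
rewrite [in RHS](divn_eq m p) mulnDr natrD.
have -> : (p ^ N.-1 * (m %/ p * p) = (m %/ p) * p ^ N)%N.
  have e : (p ^ N = p ^ N.-1 * p)%N by rewrite -expnSr prednK.
  by rewrite e; ring.
by rewrite natrM (natrM _ (m %/ p)) (pchar_Zp pN_gt1) mulr0 add0r.
Qed.

Lemma iotaD (x y : 'F_p) : iota_mu N (x + y) = iota_mu N x + iota_mu N y.
Proof.
by rewrite -(natr_Zp x) -(natr_Zp y) -natrD !iota_nat -natrD mulnDr.
Qed.

Lemma iota0 : iota_mu N (0 : 'F_p) = 0.
Proof. have E := iotaD 0 0; rewrite addr0 in E.
by apply: (addrI (iota_mu N (0 : 'F_p))); rewrite addr0 -E. Qed.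
Lemma iotaN (x : 'F_p) : iota_mu N (- x) = - iota_mu N x.
Proof. by apply/eqP; rewrite -addr_eq0 -iotaD addNr iota0. Qed.

Local Notation H := (heis p N n).
Local Notation hm := (heis_mul theta).

Lemma hmulA (a b c : H) : hm (hm a b) c = hm a (hm b c).
Proof.
case: a b c => [a1 a2] [b1 b2] [c1 c2]; rewrite /heis_mul /=; congr pair; last by rewrite addrA.
rewrite thDl thDr !mulrDl !iotaD; ring.
Qed.

Lemma hmul1h (h : H) : hm (0, 0) h = h.
Proof. by case: h => a b; rewrite /heis_mul /= th0l mul0r iota0 !add0r addr0. Qed.
Lemma hmulh1 (h : H) : hm h (0, 0) = h.
Proof. by case: h => a b; rewrite /heis_mul /= th0r mul0r iota0 !addr0. Qed.

Definition hinv (h : H) : H := (- h.1, - h.2).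
Lemma hmulV (h : H) : hm h (hinv h) = (0, 0).
Proof. by case: h => a b; rewrite /heis_mul /= thNr symp.2.2.1 oppr0 mul0r iota0 !subrr addr0. Qed.
Lemma hmulVh (h : H) : hm (hinv h) h = (0, 0).
Proof. by case: h => a b; rewrite /heis_mul /= thNl symp.2.2.1 oppr0 mul0r iota0 addr0 !addNr. Qed.

Lemma hmulC0 c (h : H) : hm (c, 0) h = (c + h.1, h.2).
Proof. by case: h => a b; rewrite /heis_mul /= th0l mul0r iota0 addr0 add0r. Qed.
Lemma hmul0C c (h : H) : hm h (c, 0) = (h.1 + c, h.2).
Proof. by case: h => a b; rewrite /heis_mul /= th0r mul0r iota0 addr0 addr0. Qed.

Lemma hcomm (h : H) y : hm h (0, y) = hm (iota_mu N (theta h.2 y), y) h.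
Proof.
case: h => a u; rewrite /heis_mul /=; congr pair; last by rewrite addrC.
have E : iota_mu N (theta u y) = iota_mu N (theta u y / 2%:R) + iota_mu N (theta u y / 2%:R).
  by rewrite -iotaD half_add.
rewrite (thA u y) E mulNr iotaN; ring.
Qed.

Lemma hmul00 x y : hm (0, x) (0, y) = (iota_mu N (theta x y / 2%:R), x + y).
Proof. by rewrite /heis_mul /= addr0 add0r. Qed.
End Basic.

Lemma Rlin0 (R : comPzRingType) (M M' : lmodType R) (f : M -> M') : Rlinear f -> f 0 = 0.
Proof. move=> fl; have := fl 1 0 0; rewrite !scale1r addr0 => E.
by apply: (addrI (f 0)); rewrite addr0 -E. Qed.
Lemma RlinD (R : comPzRingType) (M M' : lmodType R) (f : M -> M') x y : Rlinear f -> f (x + y) = f x + f y.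
Proof. by move=> fl; have := fl 1 x y; rewrite !scale1r. Qed.
Lemma RlinZ (R : comPzRingType) (M M' : lmodType R) (f : M -> M') a x : Rlinear f -> f (a *: x) = a *: f x.
Proof. by move=> fl; have := fl a x 0; rewrite !addr0 Rlin0 // addr0. Qed.
Lemma Rlin_sum (R : comPzRingType) (M M' : lmodType R) (f : M -> M') (I : finType) (G : I -> M) :
  Rlinear f -> f (\sum_i G i) = \sum_i f (G i).
Proof.
move=> fl; apply: (big_rec2 (fun x y => f x = y)); first exact: Rlin0.
by move=> i x y _ <-; rewrite RlinD.
Qed.

Section Reps.
Variables (p N n : nat).
Hypothesis pP : prime p.
Hypothesis podd : odd p.
Hypothesis N0 : (0 < N)%N.
Variable theta : 'cV['F_p]_n -> 'cV['F_p]_n -> 'F_p.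
Hypothesis symp : is_symplectic_form theta.
Variable R : comPzRingType.
Variable nu : 'Z_(p ^ N) -> R.
Hypothesis nuD : forall a b, nu (a + b) = nu a * nu b.
Hypothesis nu0 : nu 0 = 1.
Variable W : {set 'cV['F_p]_n}.
Hypothesis lagW : is_Lagrangian theta W.

Local Notation H := (heis p N n).
Local Notation hm := (heis_mul theta).

Definition chi (k : 'F_p) := nu (iota_mu N k).
Lemma chiD x y : chi (x + y) = chi x * chi y.
Proof. by rewrite /chi iotaD // nuD. Qed.
Lemma chi0 : chi 0 = 1.
Proof. by rewrite /chi iota0 // nu0. Qed.

Lemma W0 : 0 \in W. Proof. exact: lagW.1. Qed.
Lemma WD v w : v \in W -> w \in W -> v + w \in W.
Proof. by move=> vW wW; have := lagW.2.1 1 v w vW wW; rewrite scale1r. Qed.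
Lemma WZ a v : v \in W -> a *: v \in W.
Proof. by move=> vW; have := lagW.2.1 a v 0 vW W0; rewrite addr0. Qed.
Lemma WN v : v \in W -> - v \in W.
Proof. by move=> vW; rewrite -scaleN1r WZ. Qed.
Lemma Wth v w : v \in W -> w \in W -> theta v w = 0.
Proof. by move=> vW wW; apply: (lagW.2.2 v).1. Qed.

Lemma rhoC (M : lmodType R) (rho : H -> M -> M) :
  is_heis_rep theta rho -> (forall c x, rho (c, 0) x = nu c *: x) ->
  forall c v x, rho (c, v) x = nu c *: rho (0, v) x.
Proof.
move=> [_ [rm _]] rc c v x.
by rewrite -rc -rm hmulC0 //= addr0.
Qed.

Lemma eta_comm (F : {ffun H -> R}) h w : in_etaW theta nu W F -> w \in W ->
  F (hm h (0, w)) = chi (theta h.2 w) * F h.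
Proof. by move=> eF wW; rewrite hcomm // eF. Qed.

Lemma rtrans_eta k (F : {ffun H -> R}) : in_etaW theta nu W F -> in_etaW theta nu W (rtrans theta k F).
Proof. by move=> eF c w h wW; rewrite /rtrans !ffunE hmulA // eF. Qed.

Definition F0 : {ffun H -> R} := [ffun h => nu h.1 * (h.2 \in W)%:R].

Lemma F0_eta : in_etaW theta nu W F0.
Proof.
move=> c w [a u] wW; rewrite /F0 !ffunE /heis_mul /=.
case: (boolP (u \in W)) => uW.
  by rewrite WD // Wth // mul0r iota0 // addr0 !nuD mulrA.
have -> : (w + u \in W) = false.
  by apply/negbTE; apply: contra uW => wuW; rewrite -(addKr w u) WD // WN.
by rewrite !mulr0.
Qed.

Lemma hinvM (a b : H) : hinv (hm a b) = hm (hinv b) (hinv a).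
Proof.
case: a b => [a1 a2] [b1 b2]; rewrite /hinv /heis_mul /=; congr pair.
  by rewrite (thNl symp) (thNr symp) opprK (thA symp b2 a2) mulNr iotaN //; ring.
by rewrite opprD addrC.
Qed.
Lemma hinvK (h : H) : hinv (hinv h) = h.
Proof. by case: h => a b; rewrite /hinv /= !opprK. Qed.

Lemma hmulI (x : H) : injective (fun a => hm a x).
Proof.
move=> a b /= E; have := congr1 (fun y => hm y (hinv x)) E.
by rewrite /= !hmulA // !hmulV // !hmulh1.
Qed.

Definition phi (M : lmodType R) (rho : H -> M -> M) (z : M) (F : {ffun H -> R}) : M :=
  \sum_(h : H) F h *: rho (hinv h) z.

Lemma phi_homW (M : lmodType R) (rho : H -> M -> M) z :
  is_heis_rep theta rho -> homW theta nu W rho (phi rho z).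
Proof.
move=> [rl [rm r1]]; split.
  move=> a f1 f2 _ _; rewrite /phi scaler_sumr -big_split /=.
  by apply: eq_bigr => h _; rewrite /lincomb ffunE scalerDl scalerA.
move=> k F _; rewrite /phi Rlin_sum //.
rewrite (reindex_inj (@hmulI (hinv k))) /=.
apply: eq_bigr => h _; rewrite /rtrans ffunE hmulA // hmulVh // hmulh1 //.
by rewrite hinvM // hinvK rm RlinZ.
Qed.

Lemma phiF0 (M : lmodType R) (rho : H -> M -> M) z :
  is_heis_rep theta rho -> (forall c x, rho (c, 0) x = nu c *: x) ->
  phi rho z F0 = #|{: 'Z_(p ^ N)}|%:R *: \sum_(u : 'cV['F_p]_n) (u \in W)%:R *: rho (0, - u) z.
Proof.
move=> rr rc; rewrite /phi.
transitivity (\sum_(h : H) (h.2 \in W)%:R *: rho (0, - h.2) z).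
  apply: eq_bigr => [[a u]] _; rewrite /F0 ffunE /hinv /= (rhoC rr rc) scalerA.
  by rewrite mulrAC -nuD subrr nu0 mul1r.
rewrite -(pair_big predT predT (fun (a : 'Z_(p ^ N)) (u : 'cV['F_p]_n) => (u \in W)%:R *: rho (0, - u) z)) /=.
by rewrite sumr_const scaler_nat.
Qed.

Lemma conj_elt u v : hm (0, v) (hm (0, - u) (0, - v)) = (iota_mu N (theta u v), - u) :> H.
Proof.
rewrite /heis_mul /=; congr pair; last by rewrite addrCA subrr addr0.
rewrite !add0r (thNl symp) (thNr symp) opprK (thDr symp) !(thNr symp) symp.2.2.1 oppr0 addr0.
by rewrite (thA symp u v) opprK -iotaD // half_add.
Qed.

Lemma gen (M : lmodType R) (rho : H -> M -> M) x :
  is_heis_rep theta rho -> (forall c x, rho (c, 0) x = nu c *: x) ->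
  (forall u : 'cV['F_p]_n, u != 0 -> \sum_(v : 'cV['F_p]_n) chi (theta u v) = 0) ->
  \sum_(v : 'cV['F_p]_n) rho (0, v) (phi rho (rho (0, - v) x) F0)
    = (#|{: 'Z_(p ^ N)}| * #|{: 'cV['F_p]_n}|)%:R *: x.
Proof.
move=> rr rc cs; have [rl [rm r1]] := rr.
transitivity (\sum_(v : 'cV['F_p]_n) #|{: 'Z_(p ^ N)}|%:R *: \sum_(u : 'cV['F_p]_n)
   (u \in W)%:R *: (chi (theta u v) *: rho (0, - u) x)).
  apply: eq_bigr => v _; rewrite (phiF0 _ rr rc) RlinZ // Rlin_sum //; congr (_ *: _).
  apply: eq_bigr => u _; rewrite RlinZ //; congr (_ *: _).
  by rewrite -!rm hmulA // conj_elt (rhoC rr rc).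
rewrite -scaler_sumr exchange_big /=.
transitivity (#|{: 'Z_(p ^ N)}|%:R *: \sum_(u : 'cV['F_p]_n)
   (u \in W)%:R *: ((\sum_(v : 'cV['F_p]_n) chi (theta u v)) *: rho (0, - u) x)).
  congr (_ *: _); apply: eq_bigr => u _; rewrite scaler_suml scaler_sumr.
  by apply: eq_bigr => v _.
rewrite (bigD1 0) //= [X in _ + X]big1; last first.
  by move=> u u0; rewrite (cs u u0) scale0r scaler0.
rewrite addr0 W0 // scale1r oppr0 r1.
have -> : \sum_(v : 'cV['F_p]_n) chi (theta 0 v) = #|{: 'cV['F_p]_n}|%:R.
  under eq_bigr do rewrite (th0l symp) chi0.
  by rewrite sumr_const.
by rewrite scalerA -natrM.
Qed.

Lemma charsum (S0 : \sum_(k : 'F_p) chi k = 0) (u0 : R) (pinv : u0 * p%:R = 1) (u : 'cV['F_p]_n) :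
  u != 0 -> \sum_(v : 'cV['F_p]_n) chi (theta u v) = 0.
Proof.
move=> unz.
have [v1 hv1] : exists v1, theta u v1 != 0.
  case: (boolP [exists w, theta u w != 0]) => [/existsP[w hw]|/existsPn hn]; first by exists w.
  case/eqP: unz; apply: symp.2.2.2 => w.
  by move: (hn w); rewrite negbK => /eqP.
set Sg := \sum_(v : 'cV['F_p]_n) chi (theta u v).
have E t : Sg = chi (t * theta u v1) * Sg.
  rewrite /Sg mulr_sumr (reindex_inj (addIr (t *: v1))) /=.
  by apply: eq_bigr => v _; rewrite (thDr symp) (thZr symp) chiD mulrC.
have Ssum : \sum_(t : 'F_p) chi (t * theta u v1) = 0.
  by move: S0; rewrite (reindex_inj (mulIf hv1)) /=.
have Hp : Sg *+ p = 0.
  rewrite -(card_Fp pP) -sumr_const (eq_bigr (fun t => chi (t * theta u v1) * Sg)).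
    by rewrite -mulr_suml Ssum mul0r.
  by move=> t _; rewrite -E.
by rewrite -[Sg]mul1r -pinv -mulrA mulr_natl Hp mulr0.
Qed.
End Reps.

Section Transv.
Variables (p n : nat).
Variable theta : 'cV['F_p]_n -> 'cV['F_p]_n -> 'F_p.
Hypothesis symp : is_symplectic_form theta.

Lemma th_sum v (I : finType) (a : I -> 'F_p) (G : I -> 'cV['F_p]_n) :
  theta v (\sum_i a i *: G i) = \sum_i a i * theta v (G i).
Proof.
apply: (big_rec2 (fun y z => theta v y = z)); first exact: th0r.
by move=> i y z _ <-; rewrite (thDr symp) (thZr symp).
Qed.

Definition rowth v : 'rV['F_p]_n := \row_(j < n) theta v (delta_mx j 0).

Lemma rowth_mul v x : rowth v *m x = (theta v x)%:M.
Proof.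
have Ex : x = \sum_(j < n) x j 0 *: delta_mx j 0.
  by rewrite {1}(matrix_sum_delta x); apply: eq_bigr => j _; rewrite big_ord1.
apply/matrixP => i j; rewrite !ord1 !mxE [in RHS]Ex th_sum eqxx mulr1n.
by apply: eq_bigr => k _; rewrite mxE mulrC.
Qed.

Definition Tm v (s : 'F_p) : 'M['F_p]_n := 1%:M + s *: (v *m rowth v).

Lemma Tm_mul v s x : Tm v s *m x = x + (s * theta v x) *: v.
Proof.
by rewrite /Tm mulmxDl mul1mx -scalemxAl -mulmxA rowth_mul mul_mx_scalar scalerA.
Qed.

Lemma Tm_sub v s x : Tm v s *m x + - x = (s * theta v x) *: v.
Proof. by rewrite Tm_mul addrAC subrr add0r. Qed.

Lemma Tm_inv v s : Tm v s *m Tm v (- s) = 1%:M.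
Proof.
rewrite /Tm mulmxDl mul1mx mulmxDr mulmx1 -!scalemxAl -!scalemxAr.
rewrite !mulmxA -[v *m rowth v *m v]mulmxA rowth_mul symp.2.2.1.
rewrite mul_mx_scalar scale0r mul0mx !scaler0 addr0 scaleNr.
by rewrite addrNK.
Qed.

Lemma Tm_Sp v s : in_Sp theta (Tm v s).
Proof.
split; first exact: (mulmx1_unit (Tm_inv v s)).1.
move=> x y; rewrite !Tm_mul (thDl symp) !(thDr symp) !(thZl symp) !(thZr symp) symp.2.2.1.
rewrite (thA symp v x); ring.
Qed.
End Transv.

Section Weil.
Variables (p N n : nat).
Hypothesis pP : prime p.
Hypothesis podd : odd p.
Hypothesis N0 : (0 < N)%N.
Variable theta : 'cV['F_p]_n -> 'cV['F_p]_n -> 'F_p.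
Hypothesis symp : is_symplectic_form theta.
Variable R : comPzRingType.
Variable nu : 'Z_(p ^ N) -> R.
Hypothesis nuD : forall a b, nu (a + b) = nu a * nu b.
Hypothesis nu0 : nu 0 = 1.
Variable W : {set 'cV['F_p]_n}.
Hypothesis lagW : is_Lagrangian theta W.
Variable omW : 'M['F_p]_n -> {ffun heis p N n -> R} -> {ffun heis p N n -> R}.
Hypothesis wm : is_weil_model theta nu W omW.
Variable u0 : R.
Hypothesis pinv : u0 * p%:R = 1.

Local Notation H := (heis p N n).
Local Notation hm := (heis_mul theta).
Local Notation chi := (chi nu).
Local Notation etaW := (in_etaW theta nu W).
Local Notation F0 := (@F0 p N n R nu W).

Definition Ssum := \sum_(k : 'F_p) chi k.
Definition ee := u0 * Ssum.

Lemma chiS k : chi k * Ssum = Ssum.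
Proof.
rewrite /Ssum mulr_sumr; apply: esym; rewrite (reindex_inj (addrI k)) /=.
by apply: eq_bigr => j _; rewrite chiD.
Qed.

Lemma e_chi k : ee * chi k = ee.
Proof. by rewrite /ee -mulrA [Ssum * _]mulrC chiS. Qed.

Definition Inv (G : {ffun H -> R}) (y : H) := forall h, ee * G (hm h y) = ee * G h.

Lemma InvM G y1 y2 : Inv G y1 -> Inv G y2 -> Inv G (hm y1 y2).
Proof. by move=> i1 i2 h; rewrite -hmulA // i2 i1. Qed.

Lemma InvV G y : Inv G y -> Inv G (hinv y).
Proof. by move=> i h; rewrite -[in RHS](hmulh1 pP N0 symp h) -(hmulVh pP N0 symp y) -hmulA // i. Qed.

Lemma InvC G k : etaW G -> Inv G (iota_mu N k, 0).
Proof.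
move=> eG h; rewrite hmul0C // -[h.1 + _]addrC.
have -> : (iota_mu N k + h.1, h.2) = hm (iota_mu N k, 0) h by rewrite hmulC0.
rewrite eG; first by rewrite mulrA e_chi.
exact: (W0 lagW).
Qed.

Lemma InvW G w : etaW G -> w \in W -> Inv G (0, w).
Proof. by move=> eG wW h; rewrite (eta_comm pP podd N0 symp h eG wW) mulrA e_chi. Qed.

Lemma InvD G y1 y2 : etaW G -> Inv G (0, y1) -> Inv G (0, y2) -> Inv G (0, y1 + y2).
Proof.
move=> eG i1 i2.
have -> : (0, y1 + y2) = hm (iota_mu N (- (theta y1 y2 / 2%:R)), 0) (hm (0, y1) (0, y2)) :> H.
  by rewrite hmul00 hmulC0 //= iotaN // addNr.
by apply: InvM; [apply: InvC | apply: InvM].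
Qed.

Lemma InvN G y : Inv G (0, y) -> Inv G (0, - y).
Proof. by move=> i; have := InvV i; rewrite /hinv /= oppr0. Qed.

Lemma InvZ G y (a : 'F_p) : etaW G -> Inv G (0, y) -> Inv G (0, a *: y).
Proof.
move=> eG i; rewrite -(natr_Zp a); elim: (nat_of_ord a) => [|k IH].
  by rewrite scale0r => h; rewrite hmulh1.
by rewrite mulrS scalerDl scale1r; apply: InvD.
Qed.

Definition Zf : {ffun H -> R} := [ffun _ => 0].
Lemma Zf_eta : etaW Zf.
Proof. by move=> c w h _; rewrite !ffunE mulr0. Qed.

Lemma keyK v s w0 F : s != 0 -> w0 \in W -> theta v w0 != 0 -> etaW F ->
  Inv (omW (Tm theta v s) F) (0, v).
Proof.
move=> s0 w0W t0 eF.
set g := Tm theta v s.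
have [pres [lin intw]] := wm.1 g (Tm_Sp symp v s).
set Q := omW g F.
have eQ : etaW Q := pres F eF.
have Hw : lincomb ee (rtrans theta (0, w0) F) Zf = lincomb ee F Zf.
  apply/ffunP => h; rewrite /lincomb /rtrans !ffunE (eta_comm pP podd N0 symp h eF w0W).
  by rewrite mulrA e_chi.
have eR := rtrans_eta pP N0 symp (0, w0) eF.
have eZ := Zf_eta.
have := congr1 (omW g) Hw; rewrite !lin //.
have := intw 0 w0 F eF; rewrite iota0 // => ->.
move=> E.
have Ig : Inv Q (0, g *m w0).
  move=> h; have := congr1 (fun G : {ffun H -> R} => G h) E; rewrite /lincomb /rtrans !ffunE.
  by move/addIr.
have Iw : Inv Q (0, - w0) by apply: InvN; apply: InvW.
have Ic := InvD eQ Ig Iw.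
have Eg : g *m w0 + - w0 = (s * theta v w0) *: v.
  by rewrite /g Tm_sub.
rewrite Eg in Ic.
have := InvZ (s * theta v w0)^-1 eQ Ic.
by rewrite scalerA mulVf ?scale1r // mulf_neq0.
Qed.

Lemma S_zero v : v \notin W -> Ssum = 0.
Proof.
move=> vW.
have [w0 [w0W t0]] : exists w0, w0 \in W /\ theta v w0 != 0.
  case: (boolP [exists w, (w \in W) && (theta v w != 0)]) => [/existsP[w /andP[h1 h2]]|/existsPn hn].
    by exists w.
  case/negP: vW; apply/(lagW.2.2 v).2 => w wW.
  by move: (hn w); rewrite wW /= negbK => /eqP.
have eF0 : etaW F0 := F0_eta pP N0 nuD lagW.
set g1 := Tm theta v (-1); set g2 := Tm theta v 1.
have eF1 : etaW (omW g2 F0) := (wm.1 g2 (Tm_Sp symp v 1)).1 F0 eF0.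
have E : omW g1 (omW g2 F0) = F0.
  rewrite -(wm.2.1 g1 g2 F0 (Tm_Sp symp v (-1)) (Tm_Sp symp v 1) eF0).
  have := Tm_inv symp v (-1); rewrite opprK => ->.
  exact: wm.2.2.
have m1 : (-1 : 'F_p) != 0 by rewrite oppr_eq0 oner_neq0.
have K := keyK m1 w0W t0 eF1.
rewrite -/g1 E in K.
have := K (0, 0); rewrite hmul1h // /F0 !ffunE /= (negbTE vW) (W0 lagW) nu0 mulr0 mul1r mulr1.
move=> e0.
by rewrite -[Ssum]mul1r -pinv mulrAC -/ee -e0 mulr0 mul0r.
Qed.
End Weil.

Lemma comp_homW (p N n : nat) (R : comPzRingType)
  (theta : 'cV['F_p]_n -> 'cV['F_p]_n -> 'F_p) (nu : 'Z_(p ^ N) -> R) (W : {set 'cV['F_p]_n})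
  (M M' : lmodType R) (rho : heis p N n -> M -> M) (rho' : heis p N n -> M' -> M')
  (f : M -> M') (ps : {ffun heis p N n -> R} -> M) :
  hom_H theta rho rho' f -> homW theta nu W rho ps -> homW theta nu W rho' (fun F => f (ps F)).
Proof.
move=> [fl fi] [pl pi]; split.
  by move=> a f1 f2 e1 e2; rewrite pl // fl.
by move=> h F eF; rewrite pi // fi.
Qed.

Unset Implicit Arguments.

Theorem mainTheorem13 (p N n : nat) (R : comPzRingType)
  (theta : 'cV['F_p]_n -> 'cV['F_p]_n -> 'F_p) (nu : 'Z_(p ^ N) -> R)
  (W : {set 'cV['F_p]_n})
  (omW : 'M['F_p]_n -> {ffun heis p N n -> R} -> {ffun heis p N n -> R})
  (M M' : lmodType R) (rho : heis p N n -> M -> M) (rho' : heis p N n -> M' -> M')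
  (om : 'M['F_p]_n -> M -> M) (om' : 'M['F_p]_n -> M' -> M') :
  prime p -> odd p -> (0 < N)%N ->
  is_symplectic_form theta ->
  Zmu_sqrtp_algebra R p ->
  is_inj_char nu ->
  is_Lagrangian theta W ->
  is_weil_model theta nu W omW ->
  is_heisenberg_rep theta nu rho ->
  is_heisenberg_rep theta nu rho' ->
  is_assoc_weil theta nu W omW rho om ->
  is_assoc_weil theta nu W omW rho' om' ->
  forall f : M -> M',
    hom_SpH theta rho rho' om om' f <-> hom_H theta rho rho' f.
Proof.
move=> pP podd N0 symp [_ [u0 pinv]] [nuD [nu0 _]] lagW wm [rr [rc _]] [rr' [rc' _]] aw aw' f.
split; first by case.
move=> hf; split => // g x gSp.
have [fl fi] := hf.
have [oml omP] := aw g gSp.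
have [oml' omP'] := aw' g gSp.
have cs : forall u : 'cV['F_p]_n, u != 0 -> \sum_(v : 'cV['F_p]_n) chi nu (theta u v) = 0.
  case: (boolP [exists v, v \notin W]) => [/existsP [v vW] | /existsPn hall].
    by apply: (charsum pP N0 symp nuD _ pinv); exact: (S_zero pP podd N0 symp nuD nu0 lagW wm pinv vW).
  move=> u /eqP; case; apply: symp.2.2.2 => w.
  have := hall u; have := hall w; rewrite !negbK => wW uW.
  by apply: (Wth lagW).

have Gx := gen pP podd N0 symp nuD nu0 lagW x rr rc cs.
set c0 := u0 ^+ (N + n * 1).
have c0E : c0 * (#|{: 'Z_(p ^ N)}| * #|{: 'cV['F_p]_n}|)%:R = 1.
  rewrite card_ord Zp_cast ?(pN_gt1 pP N0) // card_mx card_Fp // -expnD natrX.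
  by rewrite /c0 -exprMn pinv expr1n.
have hx : x = c0 *: \sum_(v : 'cV['F_p]_n) rho (0, v) (phi rho (rho (0, - v) x) (@F0 p N n R nu W)).
  by rewrite Gx scalerA c0E scale1r.
rewrite hx (RlinZ _ _ oml) (RlinZ _ _ fl) (RlinZ _ _ fl) (RlinZ _ _ oml') (Rlin_sum _ oml) (Rlin_sum _ fl) (Rlin_sum _ fl) (Rlin_sum _ oml').
congr (_ *: _).
apply: eq_bigr => v _.
set z := rho (0, - v) x.
have hp := phi_homW pP N0 symp nu W z rr.
have eF : in_etaW theta nu W (rtrans theta (0, v) (@F0 p N n R nu W)).
  exact: (rtrans_eta pP N0 symp (0, v) (F0_eta pP N0 nuD lagW)).
rewrite -(hp.2 (0, v) _ (F0_eta pP N0 nuD lagW)).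
rewrite (omP _ hp _ eF).
have hq := comp_homW hf hp.
by rewrite (omP' _ hq _ eF).
Qed.
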